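(* Let $k\in\mathbb{N}$, $G=(g_1,\dots,g_k)\in\mathbb{N}_0^k$ with $g_1>0$, $g\in\langle G\rangle$, and $m\in\mathbb{N}$ with $\gcd(g,m)=1$. Then $G$ is telescopic if and only if $\tau_{g,m}(G)$ is telescopic.
   Context: $\langle G\rangle$ is the set of $\mathbb{N}_0$-linear combinations of the entries of $G$. $G_i=(g_1,\dots,g_i)$, $d_i=\gcd(G_i)$, $c_j=d_{j-1}/d_j$; $G$ is telescopic if $c_jg_j\in\langle G_{j-1}\rangle$ for $2\le j\le k$. For $g\in\langle G\rangle$ and $m\in\mathbb{N}$ with $\gcd(m,g)=1$, $\tau_{g,m}(G)=(mg_1,\dots,mg_k,g)\in\mathbb{N}_0^{k+1}$. *)

(* Defs.v *)
From mathcomp Require Import all_boot.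
Set Implicit Arguments. Unset Strict Implicit. Unset Printing Implicit Defensive.

(* A finite sequence G = (g_1,...,g_k) of naturals is a [seq nat]; g_i is
   [nth 0 G (i-1)] (1-based indices of the paper shifted to 0-based). *)

Definition inSG (G : seq nat) (x : nat) : Prop :=
  exists a : nat -> nat, x = \sum_(i < size G) a i * nth 0 G i.

Definition Gpre (G : seq nat) (i : nat) : seq nat := take i G.

Definition dG (G : seq nat) (i : nat) : nat := foldr gcdn 0 (Gpre G i).

Definition cG (G : seq nat) (j : nat) : nat := dG G j.-1 %/ dG G j.

Definition telescopic (G : seq nat) : Prop :=
  forall j : nat, 2 <= j <= size G ->
    inSG (Gpre G j.-1) (cG G j * nth 0 G j.-1).

Definition tau (g m : nat) (G : seq nat) : seq nat :=
  rcons (map (fun x => m * x) G) g.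

(* Main.v *)
Require Import Defs.
From mathcomp Require Import all_boot.

Lemma take_rcons_le (s : seq nat) x n : n <= size s -> take n (rcons s x) = take n s.
Proof.
move=> h; rewrite -cats1 take_cat; case: ltnP => // h2.
have -> : n = size s by apply/eqP; rewrite eqn_leq h h2.
by rewrite subnn take0 cats0 take_size.
Qed.

Lemma foldr_gcd_map m s : foldr gcdn 0 (map (fun x => m * x) s) = m * foldr gcdn 0 s.
Proof. elim: s => [|a s IH] /=; first by rewrite muln0. by rewrite IH muln_gcdr. Qed.

Lemma foldr_gcd_z s z : foldr gcdn z s = gcdn (foldr gcdn 0 s) z.
Proof. elim: s => [|a s IH] /=; first by rewrite gcd0n. by rewrite IH gcdnA. Qed.

Lemma foldr_gcd_dvd s i : foldr gcdn 0 s %| nth 0 s i.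
Proof.
elim: s i => [|a s IH] [|i] /=; rewrite ?dvdn0 ?dvdn_gcdl //.
exact: dvdn_trans (dvdn_gcdr _ _) (IH i).
Qed.

Lemma inSG_scale m s x : 0 < m ->
  inSG (map (fun y => m * y) s) (m * x) <-> inSG s x.
Proof.
move=> m0; rewrite /inSG size_map; split=> -[a ha]; exists a.
- apply/eqP; rewrite -(eqn_pmul2l m0) ha big_distrr /=; apply/eqP/eq_bigr=> i _.
  by rewrite (nth_map 0) // mulnCA.
- rewrite ha big_distrr /=; apply/eq_bigr=> i _.
  by rewrite (nth_map 0) // mulnCA.
Qed.

Lemma inSG_dvd s x : inSG s x -> foldr gcdn 0 s %| x.
Proof.
move=> [a ->]; apply: dvdn_sum => i _; apply: dvdn_mull; exact: foldr_gcd_dvd.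
Qed.

Lemma dG_pos G j : 0 < nth 0 G 0 -> 0 < j -> 0 < dG G j.
Proof.
case: G => [|a G] //= ha; case: j => // j _.
by rewrite /dG /Gpre /= gcdn_gt0 ha.
Qed.

Theorem mainTheorem12 (k : nat) (G : seq nat) (g m : nat) :
  0 < k -> size G = k -> 0 < nth 0 G 0 ->
  inSG G g -> 0 < m -> coprime g m ->
  (telescopic G <-> telescopic (tau g m G)).
Proof.
move=> k0 sG g0 gin m0 cop.
have stau : size (tau g m G) = k.+1 by rewrite /tau size_rcons size_map sG.
have Gp : forall j, j <= k -> Gpre (tau g m G) j = map (fun y => m * y) (Gpre G j).
  by move=> j hj; rewrite /Gpre /tau take_rcons_le ?size_map ?sG // map_take.
have dp : forall j, j <= k -> dG (tau g m G) j = m * dG G j.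
  by move=> j hj; rewrite /dG Gp // foldr_gcd_map.
have key : forall j, 2 <= j <= k ->
  (inSG (Gpre (tau g m G) j.-1) (cG (tau g m G) j * nth 0 (tau g m G) j.-1) <->
   inSG (Gpre G j.-1) (cG G j * nth 0 G j.-1)).
  move=> j /andP[j2 jk].
  have j1k : j.-1 <= k by rewrite (leq_trans (leq_pred j)).
  rewrite Gp // /cG !dp // divnMl // /tau nth_rcons size_map sG.
  have -> : j.-1 < k by case: j j2 jk {j1k} => // j _ /=.
  rewrite (nth_map 0); last by rewrite sG; case: j j2 jk {j1k}.
  by rewrite mulnCA; apply: inSG_scale.
split=> T j /andP[j2 jk].
- rewrite stau in jk; rewrite leq_eqVlt in jk; case/orP: jk => jk.
  + move/eqP: jk => jk; subst j; rewrite /=.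
    have dk : dG G k = foldr gcdn 0 G by rewrite /dG /Gpre -sG take_size.
    have dpos : 0 < dG G k by apply: dG_pos.
    have dvg : dG G k %| g by rewrite dk; exact: inSG_dvd.
    have -> : cG (tau g m G) k.+1 = m.
      rewrite /cG /= dp // /dG /Gpre /tau [take k.+1 _]take_oversize ?size_rcons ?size_map ?sG // [take k G]take_oversize ?sG // foldr_rcons gcdn0 (foldr_gcd_z _ g) foldr_gcd_map.
      rewrite -dk.
      move: dvg => /dvdnP [g' hg'].
      have -> : gcdn (m * dG G k) g = dG G k.
        rewrite hg' [m * _]mulnC [g' * _]mulnC -muln_gcdr.
        have : coprime m g'.
          rewrite coprime_sym; apply: (coprime_dvdl _ cop).
          by rewrite hg' dvdn_mulr.
        by rewrite /coprime => /eqP ->; rewrite muln1.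
      by rewrite mulnK.
    rewrite Gp // /Gpre -sG take_size /tau nth_rcons size_map ltnn eqxx.
    by apply/inSG_scale.
  + apply/key; first by rewrite j2 -ltnS.
    apply: T; by rewrite j2 sG -ltnS.
- rewrite sG in jk; apply/(key j); first by rewrite j2.
  apply: T; rewrite j2 stau; exact: leq_trans jk _.
Qed.
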